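(* Let $M\subset\mathbb{R}^2$ be open with coordinates $(x,u)$, let $M^{(1)}$ be the first-order jet space with coordinates $(x,u,u_x)$, and consider the ODE $u_{xx}=\phi(x,u,u_x)$ with associated vector field $\mathbf{A}=\partial_x+u_x\partial_u+\phi\,\partial_{u_x}$. Let $(\partial_u,\lambda_1)$ and $(\partial_u,\lambda_2)$ be the canonical representatives of two non-equivalent generalized $\mathcal{C}^\infty$-symmetries of this ODE. Let $\mathbf{X}_i=\partial_u+\lambda_i\partial_{u_x}$, $\rho=\dfrac{\mathbf{X}_1(\lambda_2)-\mathbf{X}_2(\lambda_1)}{\lambda_1-\lambda_2}$, let $f_1,f_2\in C^\infty(M^{(1)})$ satisfy $\dfrac{\mathbf{X}_1(f_2)}{f_2}=\dfrac{\mathbf{X}_2(f_1)}{f_1}=\rho$, let $\mathbf{Y}_i=f_i\mathbf{X}_i$, $\rho_i=\lambda_i-\mathbf{A}(f_i)/f_i$, and let $g_1,g_2\in C^\infty(M^{(1)})$ satisfy $\mathbf{A}(g_1)=\rho_1g_1$, $\mathbf{Y}_2(g_1)=0$, $\mathbf{A}(g_2)=\rho_2g_2$, $\mathbf{Y}_1(g_2)=0$. Then: (1) The functions $$\mu_1=\frac{1}{f_2g_2(\lambda_2-\lambda_1)},\qquad \mu_2=\frac{1}{f_1g_1(\lambda_1-\lambda_2)}$$ are integrating factors of the ODE; a first integral $I_1$ (resp. $I_2$) of $\mathbf{A}$ associated to $(\partial_u,\lambda_1)$ (resp. $(\partial_u,\lambda_2)$) can be obtained by quadratures from $(I_1)_x=\mu_1(\lambda_1u_x-\phi)$,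 $(I_1)_u=-\lambda_1\mu_1$, $(I_1)_{u_x}=\mu_1$ (resp. $(I_2)_x=\mu_2(\lambda_2u_x-\phi)$, $(I_2)_u=-\lambda_2\mu_2$, $(I_2)_{u_x}=\mu_2$). (2) The function $$M=\frac{1}{f_1g_1f_2g_2(\lambda_2-\lambda_1)}$$ is a Jacobi last multiplier of the ODE.
   Context: All functions are smooth on $M^{(1)}$ and all statements are local, on an open set where $\lambda_1-\lambda_2$, $f_1,f_2,g_1,g_2$ do not vanish. For smooth $\xi,\eta,\lambda$ on $M^{(1)}$ and $\mathbf{v}=\xi\partial_x+\eta\partial_u$, the $\lambda$-prolongation is $\mathbf{v}^{[\lambda,(1)]}=\mathbf{v}+\big((\mathbf{A}+\lambda)(\eta)-(\mathbf{A}+\lambda)(\xi)u_x\big)\partial_{u_x}$. The pair $(\mathbf{v},\lambda)$ is a generalized $\mathcal{C}^\infty$-symmetry of the ODE if $[\mathbf{v}^{[\lambda,(1)]},\mathbf{A}]=\lambda\,\mathbf{v}^{[\lambda,(1)]}-(\mathbf{A}+\lambda)(\xi)\,\mathbf{A}$. A first integral of $\mathbf{A}$ associated to $(\mathbf{v},\lambda)$ is a function $I$ with $\mathbf{A}(I)=\mathbf{v}^{[\lambda,(1)]}(I)=0$. Two generalized $\mathcal{C}^\infty$-symmetries are $\mathbf{A}$-equivalent if $\{\mathbf{A},\mathbf{v}_1^{[\lambda_1,(1)]},\mathbf{v}_2^{[\lambda_2,(1)]}\}$ is linearly dependent over $C^\infty(M^{(1)})$; if $Q=\eta-\xi u_x$,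 the canonical representative of the class of $(\mathbf{v},\lambda)$ is $(\partial_u,\lambda+\mathbf{A}(Q)/Q)$. An integrating factor of the ODE is a function $\mu(x,u,u_x)$ such that $\mu\,(u_{xx}-\phi)=\mathbf{D}_x(I)$ for some function $I(x,u,u_x)$, where $\mathbf{D}_x=\partial_x+u_x\partial_u+u_{xx}\partial_{u_x}+\cdots$ is the total derivative. A Jacobi last multiplier of the ODE is a function $M(x,u,u_x)$ with $\mathbf{A}(M)+M\,\phi_{u_x}=0$. *)

(* Defs.v *)
From Stdlib Require Import Reals List.
From Coquelicot Require Import Coquelicot.
Open Scope R_scope.

(* Functions on the jet space M^(1) with coordinates (x,u,p), p = u_x. *)
Definition fn3 := R -> R -> R -> R.

Definition open3 (U : R -> R -> R -> Prop) : Prop :=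
  forall x u p, U x u p -> exists r, 0 < r /\
    forall x' u' p', Rabs (x' - x) < r -> Rabs (u' - u) < r -> Rabs (p' - p) < r ->
      U x' u' p'.

Definition continuous3_at (f : fn3) x u p : Prop :=
  forall eps, 0 < eps -> exists d, 0 < d /\
    forall x' u' p', Rabs (x' - x) < d -> Rabs (u' - u) < d -> Rabs (p' - p) < d ->
      Rabs (f x' u' p' - f x u p) < eps.

Definition d_x (f : fn3) : fn3 := fun x u p => Derive (fun t => f t u p) x.
Definition d_u (f : fn3) : fn3 := fun x u p => Derive (fun t => f x t p) u.
Definition d_p (f : fn3) : fn3 := fun x u p => Derive (fun t => f x u t) p.

Inductive dir := Dx | Du | Dp.

Definition dpart (d : dir) : fn3 -> fn3 :=
  match d with Dx => d_x | Du => d_u | Dp => d_p end.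

Definition ex_dpart (d : dir) (f : fn3) x u p : Prop :=
  match d with
  | Dx => ex_derive (fun t => f t u p) x
  | Du => ex_derive (fun t => f x t p) u
  | Dp => ex_derive (fun t => f x u t) p
  end.

Fixpoint iter_part (l : list dir) (f : fn3) : fn3 :=
  match l with nil => f | d :: l' => dpart d (iter_part l' f) end.

Definition smooth_on (U : R -> R -> R -> Prop) (f : fn3) : Prop :=
  forall (l : list dir) x u p, U x u p ->
    continuous3_at (iter_part l f) x u p /\
    forall d, ex_dpart d (iter_part l f) x u p.

Record vfield := VF { vx : fn3; vu : fn3; vp : fn3 }.

Definition vapp (V : vfield) (f : fn3) : fn3 :=
  fun x u p => vx V x u p * d_x f x u p + vu V x u p * d_u f x u p
             + vp V x u p * d_p f x u p.

Definition lie (V W : vfield) : vfield :=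
  VF (fun x u p => vapp V (vx W) x u p - vapp W (vx V) x u p)
     (fun x u p => vapp V (vu W) x u p - vapp W (vu V) x u p)
     (fun x u p => vapp V (vp W) x u p - vapp W (vp V) x u p).

Definition veq_on (U : R -> R -> R -> Prop) (V W : vfield) : Prop :=
  forall x u p, U x u p ->
    vx V x u p = vx W x u p /\ vu V x u p = vu W x u p /\ vp V x u p = vp W x u p.

Definition Afield (phi : fn3) : vfield :=
  VF (fun _ _ _ => 1) (fun _ _ p => p) phi.

Definition Aplus (phi lam h : fn3) : fn3 :=
  fun x u p => vapp (Afield phi) h x u p + lam x u p * h x u p.

Definition prol (phi xi eta lam : fn3) : vfield :=
  VF xi eta (fun x u p => Aplus phi lam eta x u p - Aplus phi lam xi x u p * p).

Definition gen_sym (U : R -> R -> R -> Prop) (phi xi eta lam : fn3) : Prop :=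
  smooth_on U xi /\ smooth_on U eta /\ smooth_on U lam /\
  veq_on U (lie (prol phi xi eta lam) (Afield phi))
    (VF (fun x u p => lam x u p * vx (prol phi xi eta lam) x u p
                      - Aplus phi lam xi x u p * vx (Afield phi) x u p)
        (fun x u p => lam x u p * vu (prol phi xi eta lam) x u p
                      - Aplus phi lam xi x u p * vu (Afield phi) x u p)
        (fun x u p => lam x u p * vp (prol phi xi eta lam) x u p
                      - Aplus phi lam xi x u p * vp (Afield phi) x u p)).

Definition lin_dep3 (U : R -> R -> R -> Prop) (V1 V2 V3 : vfield) : Prop :=
  exists a b c : fn3, smooth_on U a /\ smooth_on U b /\ smooth_on U c /\
    (exists x u p, U x u p /\ (a x u p <> 0 \/ b x u p <> 0 \/ c x u p <> 0)) /\
    forall x u p, U x u p ->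
      a x u p * vx V1 x u p + b x u p * vx V2 x u p + c x u p * vx V3 x u p = 0 /\
      a x u p * vu V1 x u p + b x u p * vu V2 x u p + c x u p * vu V3 x u p = 0 /\
      a x u p * vp V1 x u p + b x u p * vp V2 x u p + c x u p * vp V3 x u p = 0.

Definition A_equiv (U : R -> R -> R -> Prop) (phi xi1 eta1 lam1 xi2 eta2 lam2 : fn3)
  : Prop :=
  lin_dep3 U (Afield phi) (prol phi xi1 eta1 lam1) (prol phi xi2 eta2 lam2).

Definition canon_lambda (phi xi eta lam : fn3) : fn3 :=
  fun x u p => lam x u p +
    vapp (Afield phi) (fun x u p => eta x u p - xi x u p * p) x u p
    / (eta x u p - xi x u p * p).

Definition zero3 : fn3 := fun _ _ _ => 0.
Definition one3 : fn3 := fun _ _ _ => 1.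

Definition is_canonical_rep (U : R -> R -> R -> Prop) (phi lam : fn3) : Prop :=
  exists xi eta lam0 : fn3, gen_sym U phi xi eta lam0 /\
    (forall x u p, U x u p -> eta x u p - xi x u p * p <> 0) /\
    forall x u p, U x u p -> lam x u p = canon_lambda phi xi eta lam0 x u p.

Definition first_integral_assoc (U : R -> R -> R -> Prop) (phi xi eta lam I : fn3)
  : Prop :=
  smooth_on U I /\
  forall x u p, U x u p ->
    vapp (Afield phi) I x u p = 0 /\ vapp (prol phi xi eta lam) I x u p = 0.

Definition open_nbhd_in (U V : R -> R -> R -> Prop) x u p : Prop :=
  open3 V /\ V x u p /\ (forall x' u' p', V x' u' p' -> U x' u' p').

(* mu is an integrating factor (locally on U): mu (u_xx - phi) = D_x I,
   with u_xx a free jet coordinate q. *)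
Definition integrating_factor (U : R -> R -> R -> Prop) (phi mu : fn3) : Prop :=
  forall x u p, U x u p -> exists (V : R -> R -> R -> Prop) (I : fn3),
    open_nbhd_in U V x u p /\ smooth_on V I /\
    forall x' u' p' q, V x' u' p' ->
      mu x' u' p' * (q - phi x' u' p')
      = d_x I x' u' p' + p' * d_u I x' u' p' + q * d_p I x' u' p'.

Definition jacobi_last_multiplier (U : R -> R -> R -> Prop) (phi M : fn3) : Prop :=
  forall x u p, U x u p -> vapp (Afield phi) M x u p + M x u p * d_p phi x u p = 0.

Definition Xf (lam : fn3) : vfield := VF zero3 one3 lam.

(* Main.v *)
Require Import Defs.
From Stdlib Require Import Reals Lra List.
From Coquelicot Require Import Coquelicot.
Open Scope R_scope.

Lemma loc_of (x:R) (P:R->Prop) r : 0<r -> (forall y, Rabs (y-x) < r -> P y) -> locally x P.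
Proof. intros Hr H. exists (mkposreal r Hr). intros y Hy. apply H. exact Hy. Qed.

Definition F3 (f:fn3) (z : R * (R * R)) : R := f (fst z) (fst (snd z)) (snd (snd z)).

Lemma cont3_iff f x u p : continuous3_at f x u p <-> continuous (F3 f) (x,(u,p)).
Proof.
  split.
  - intros H. apply filterlim_locally. intros eps.
    destruct (H eps (cond_pos eps)) as [d [Hd Hd']].
    exists (mkposreal d Hd). intros [x' [u' p']] [H1 [H2 H3]]. 
    apply Hd'; assumption.
  - intros H eps Heps. 
    destruct (proj1 (filterlim_locally _ _) H (mkposreal eps Heps)) as [d Hd].
    exists d. split. apply cond_pos. intros x' u' p' H1 H2 H3.
    apply (Hd (x',(u',p'))). split; [exact H1| split; assumption].
Qed.

Lemma cont3_plus f g x u p : continuous3_at f x u p -> continuous3_at g x u p ->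
  continuous3_at (fun x u p => f x u p + g x u p) x u p.
Proof. rewrite !cont3_iff. intros. exact (continuous_plus (F3 f) (F3 g) _ H H0). Qed.
Lemma cont3_mult f g x u p : continuous3_at f x u p -> continuous3_at g x u p ->
  continuous3_at (fun x u p => f x u p * g x u p) x u p.
Proof. rewrite !cont3_iff. intros. exact (continuous_mult (F3 f) (F3 g) _ H H0). Qed.
Lemma cont3_inv f x u p : continuous3_at f x u p -> f x u p <> 0 ->
  continuous3_at (fun x u p => / f x u p) x u p.
Proof. rewrite !cont3_iff. intros. 
  apply (continuous_comp (F3 f) (fun y => / y) _ H). apply continuous_Rinv. exact H0. Qed.
Lemma cont3_const c x u p : continuous3_at (fun _ _ _ => c) x u p.
Proof. intros e He. exists 1. split. lra. intros. rewrite Rminus_diag, Rabs_R0. exact He. Qed.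
Lemma cont3_p x u p : continuous3_at (fun _ _ p => p) x u p.
Proof. intros e He. exists e. split. lra. intros. assumption. Qed.

Definition base (U : R -> R -> R -> Prop) (f : fn3) : Prop :=
  forall x u p, U x u p -> continuous3_at f x u p /\ forall d, ex_dpart d f x u p.

Fixpoint Sm (U : R -> R -> R -> Prop) (n : nat) (f : fn3) : Prop :=
  base U f /\ match n with O => True | S m => forall d, Sm U m (dpart d f) end.

Lemma iter_app l d f : iter_part (l ++ d :: nil) f = iter_part l (dpart d f).
Proof. induction l; simpl; congruence. Qed.

Lemma smooth_Sm U f : smooth_on U f -> forall n, Sm U n f.
Proof.
  intros H n. revert f H. induction n; intros f H; simpl; split.
  - intros x u p Hp. exact (H nil x u p Hp).
  - exact I.
  - intros x u p Hp. exact (H nil x u p Hp).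
  - intros d. apply IHn. intros l x u p Hp. rewrite <- iter_app. apply H; exact Hp.
Qed.

Lemma Sm_smooth U f : (forall n, Sm U n f) -> smooth_on U f.
Proof.
  assert (forall l f, (forall n, Sm U n f) -> base U (iter_part l f)).
  { intros l. induction l using rev_ind; intros g H.
    - exact (proj1 (H O)).
    - rewrite iter_app. apply IHl. intros n. exact (proj2 (H (S n)) x). }
  intros Hf l x u p Hp. exact (H l f Hf x u p Hp).
Qed.

Lemma Sm_S U n f : Sm U (S n) f -> Sm U n f.
Proof.
  revert f. induction n; intros f [Hb Hd]; split; [exact Hb|exact I|exact Hb|].
  intros d. apply IHn. apply Hd.
Qed.

Lemma Sm_base U n f : Sm U n f -> base U f.
Proof. destruct n; intros [H _]; exact H. Qed.

Section Loc.
Variable U : R -> R -> R -> Prop.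
Hypothesis HU : open3 U.

Lemma loc_x x u p : U x u p -> locally x (fun t => U t u p).
Proof. intros H. destruct (HU x u p H) as [r [Hr Hr']]. apply (loc_of _ _ r Hr).
  intros y Hy. apply Hr'; try rewrite Rminus_diag, Rabs_R0; assumption. Qed.
Lemma loc_u x u p : U x u p -> locally u (fun t => U x t p).
Proof. intros H. destruct (HU x u p H) as [r [Hr Hr']]. apply (loc_of _ _ r Hr).
  intros y Hy. apply Hr'; try rewrite Rminus_diag, Rabs_R0; assumption. Qed.
Lemma loc_p x u p : U x u p -> locally p (fun t => U x u t).
Proof. intros H. destruct (HU x u p H) as [r [Hr Hr']]. apply (loc_of _ _ r Hr).
  intros y Hy. apply Hr'; try rewrite Rminus_diag, Rabs_R0; assumption. Qed.

Lemma dpart_ext d f g x u p : (forall x u p, U x u p -> f x u p = g x u p) -> U x u p ->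
  dpart d f x u p = dpart d g x u p.
Proof.
  intros E H. destruct d; simpl; unfold d_x, d_u, d_p; apply Derive_ext_loc.
  - eapply filter_imp; [|apply (loc_x x u p H)]. intros t Ht; apply E; exact Ht.
  - eapply filter_imp; [|apply (loc_u x u p H)]. intros t Ht; apply E; exact Ht.
  - eapply filter_imp; [|apply (loc_p x u p H)]. intros t Ht; apply E; exact Ht.
Qed.

Lemma ex_dpart_ext d f g x u p : (forall x u p, U x u p -> f x u p = g x u p) -> U x u p ->
  ex_dpart d f x u p -> ex_dpart d g x u p.
Proof.
  intros E H. destruct d; simpl; apply ex_derive_ext_loc.
  - eapply filter_imp; [|apply (loc_x x u p H)]. intros t Ht; apply E; exact Ht.
  - eapply filter_imp; [|apply (loc_u x u p H)]. intros t Ht; apply E; exact Ht.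
  - eapply filter_imp; [|apply (loc_p x u p H)]. intros t Ht; apply E; exact Ht.
Qed.

Lemma cont3_ext f g x u p : (forall x u p, U x u p -> f x u p = g x u p) -> U x u p ->
  continuous3_at f x u p -> continuous3_at g x u p.
Proof.
  intros E H Hc eps He. destruct (Hc eps He) as [d [Hd Hd']].
  destruct (HU x u p H) as [r [Hr Hr']].
  exists (Rmin d r). split. apply Rmin_pos; assumption.
  intros x' u' p' H1 H2 H3.
  assert (Hm: forall a, Rabs a < Rmin d r -> Rabs a < r /\ Rabs a < d).
  { intros a Ha. split; eapply Rlt_le_trans; try apply Ha; [apply Rmin_r|apply Rmin_l]. }
  apply Hm in H1, H2, H3.
  rewrite <- (E x' u' p'), <- (E x u p) by (first [exact H | apply Hr'; tauto]).
  apply Hd'; tauto.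
Qed.

Lemma Sm_ext n f g : (forall x u p, U x u p -> f x u p = g x u p) -> Sm U n f -> Sm U n g.
Proof.
  revert f g. induction n; intros f g E [Hb Hd]; split.
  - intros x u p H. destruct (Hb x u p H) as [H1 H2]. split.
    eapply cont3_ext; eauto. intros d; eapply ex_dpart_ext; eauto.
  - exact I.
  - intros x u p H. destruct (Hb x u p H) as [H1 H2]. split.
    eapply cont3_ext; eauto. intros d; eapply ex_dpart_ext; eauto.
  - intros d. apply (IHn (dpart d f)); [|apply Hd].
    intros x u p H. apply dpart_ext; assumption.
Qed.
End Loc.

Lemma exd_plus d f g x u p : ex_dpart d f x u p -> ex_dpart d g x u p ->
  ex_dpart d (fun x u p => f x u p + g x u p) x u p.
Proof. destruct d; simpl; intros H1 H2; exact (ex_derive_plus _ _ _ H1 H2). Qed.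
Lemma exd_minus d f g x u p : ex_dpart d f x u p -> ex_dpart d g x u p ->
  ex_dpart d (fun x u p => f x u p - g x u p) x u p.
Proof. destruct d; simpl; intros H1 H2; exact (ex_derive_minus _ _ _ H1 H2). Qed.
Lemma exd_mult d f g x u p : ex_dpart d f x u p -> ex_dpart d g x u p ->
  ex_dpart d (fun x u p => f x u p * g x u p) x u p.
Proof. destruct d; simpl; intros H1 H2; exact (ex_derive_mult _ _ _ H1 H2). Qed.
Lemma exd_inv d f x u p : ex_dpart d f x u p -> f x u p <> 0 ->
  ex_dpart d (fun x u p => / f x u p) x u p.
Proof. destruct d; simpl; intros H1 H2; exact (ex_derive_inv _ _ H1 H2). Qed.
Lemma exd_const d c x u p : ex_dpart d (fun _ _ _ => c) x u p.
Proof. destruct d; simpl; apply ex_derive_const. Qed.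
Lemma exd_p d x u p : ex_dpart d (fun _ _ p => p) x u p.
Proof. destruct d; simpl; [apply ex_derive_const|apply ex_derive_const|apply ex_derive_id]. Qed.

Lemma D_plus d f g x u p : ex_dpart d f x u p -> ex_dpart d g x u p ->
  dpart d (fun x u p => f x u p + g x u p) x u p = dpart d f x u p + dpart d g x u p.
Proof. destruct d; simpl; intros H1 H2; exact (Derive_plus _ _ _ H1 H2). Qed.
Lemma D_minus d f g x u p : ex_dpart d f x u p -> ex_dpart d g x u p ->
  dpart d (fun x u p => f x u p - g x u p) x u p = dpart d f x u p - dpart d g x u p.
Proof. destruct d; simpl; intros H1 H2; exact (Derive_minus _ _ _ H1 H2). Qed.
Lemma D_mult d f g x u p : ex_dpart d f x u p -> ex_dpart d g x u p ->
  dpart d (fun x u p => f x u p * g x u p) x u p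
  = dpart d f x u p * g x u p + f x u p * dpart d g x u p.
Proof. destruct d; simpl; intros H1 H2; exact (Derive_mult _ _ _ H1 H2). Qed.
Lemma D_inv d f x u p : ex_dpart d f x u p -> f x u p <> 0 ->
  dpart d (fun x u p => / f x u p) x u p = - dpart d f x u p / (f x u p) ^ 2.
Proof. destruct d; simpl; intros H1 H2; exact (Derive_inv _ _ H1 H2). Qed.
Lemma D_const d c x u p : dpart d (fun _ _ _ => c) x u p = 0.
Proof. destruct d; simpl; unfold d_x, d_u, d_p; apply Derive_const. Qed.
Lemma D_p d x u p : dpart d (fun _ _ p => p) x u p = match d with Dp => 1 | _ => 0 end.
Proof. destruct d; simpl; unfold d_x, d_u, d_p; 
  [apply Derive_const|apply Derive_const|apply (Derive_id p)]. Qed.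

Section Clo.
Variable U : R -> R -> R -> Prop.
Hypothesis HU : open3 U.

Lemma Sm_const n c : Sm U n (fun _ _ _ => c).
Proof.
  revert c; induction n; intros c; split.
  1,3: intros x u p _; split; [apply cont3_const|intros d; apply exd_const].
  exact I.
  intros d. apply (Sm_ext U HU _ (fun _ _ _ => 0)); [|apply IHn].
  intros; rewrite D_const; reflexivity.
Qed.
Hint Resolve Sm_const : core.

Lemma Sm_p n : Sm U n (fun _ _ p => p).
Proof.
  destruct n; split.
  1,3: intros x u p _; split; [apply cont3_p|intros d; apply exd_p].
  exact I.
  intros d. apply (Sm_ext U HU _ (fun _ _ _ => match d with Dp => 1 | _ => 0 end)); [|apply Sm_const].
  intros; rewrite D_p; reflexivity.
Qed.

Lemma Sm_plus n f g : Sm U n f -> Sm U n g -> Sm U n (fun x u p => f x u p + g x u p).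
Proof.
  revert f g; induction n; intros f g Hf Hg; split.
  1,3: intros x u p H; destruct (Sm_base _ _ _ Hf x u p H) as [Hf1 Hf2];
       destruct (Sm_base _ _ _ Hg x u p H) as [Hg1 Hg2];
       split; [apply cont3_plus; auto|intros d; apply exd_plus; auto].
  exact I.
  intros d. apply (Sm_ext U HU _ (fun x u p => dpart d f x u p + dpart d g x u p)).
  - intros x u p H. rewrite D_plus; [reflexivity| |].
    apply (Sm_base _ _ _ Hf x u p H). apply (Sm_base _ _ _ Hg x u p H).
  - apply IHn; [apply (proj2 Hf)|apply (proj2 Hg)].
Qed.

Lemma Sm_minus n f g : Sm U n f -> Sm U n g -> Sm U n (fun x u p => f x u p - g x u p).
Proof.
  revert f g; induction n; intros f g Hf Hg; split.
  1,3: intros x u p H; destruct (Sm_base _ _ _ Hf x u p H) as [Hf1 Hf2];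
       destruct (Sm_base _ _ _ Hg x u p H) as [Hg1 Hg2];
       split; [|intros d; apply exd_minus; auto].
  1,2: apply (cont3_ext U HU (fun x u p => f x u p + (-1) * g x u p)); [intros; ring|exact H|];
       apply cont3_plus; auto; apply cont3_mult; auto; apply cont3_const.
  exact I.
  intros d. apply (Sm_ext U HU _ (fun x u p => dpart d f x u p - dpart d g x u p)).
  - intros x u p H. rewrite D_minus; [reflexivity| |].
    apply (Sm_base _ _ _ Hf x u p H). apply (Sm_base _ _ _ Hg x u p H).
  - apply IHn; [apply (proj2 Hf)|apply (proj2 Hg)].
Qed.

Lemma Sm_mult n f g : Sm U n f -> Sm U n g -> Sm U n (fun x u p => f x u p * g x u p).
Proof.
  revert f g; induction n; intros f g Hf Hg; split.
  1,3: intros x u p H; destruct (Sm_base _ _ _ Hf x u p H) as [Hf1 Hf2];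
       destruct (Sm_base _ _ _ Hg x u p H) as [Hg1 Hg2];
       split; [apply cont3_mult; auto|intros d; apply exd_mult; auto].
  exact I.
  intros d. apply (Sm_ext U HU _ (fun x u p => dpart d f x u p * g x u p + f x u p * dpart d g x u p)).
  - intros x u p H. rewrite D_mult; [reflexivity| |].
    apply (Sm_base _ _ _ Hf x u p H). apply (Sm_base _ _ _ Hg x u p H).
  - apply Sm_plus; apply IHn; try apply (proj2 Hf); try apply (proj2 Hg);
    apply Sm_S; assumption.
Qed.

Lemma Sm_inv n f : (forall x u p, U x u p -> f x u p <> 0) -> Sm U n f ->
  Sm U n (fun x u p => / f x u p).
Proof.
  intros Hnz. revert f Hnz; induction n; intros f Hnz Hf; split.
  1,3: intros x u p H; destruct (Sm_base _ _ _ Hf x u p H) as [Hf1 Hf2];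
       split; [apply cont3_inv; auto|intros d; apply exd_inv; auto].
  exact I.
  intros d. apply (Sm_ext U HU _ (fun x u p => ((-1) * dpart d f x u p) * ((/ f x u p) * (/ f x u p)))).
  - intros x u p H. rewrite D_inv; [|apply (Sm_base _ _ _ Hf x u p H)|auto].
    field. auto.
  - apply Sm_mult. apply Sm_mult. apply Sm_const. apply (proj2 Hf).
    apply Sm_mult; apply IHn; auto; apply Sm_S; auto.
Qed.
End Clo.



Lemma c3_x F x u p : continuous3_at F x u p -> continuous (fun t => F t u p) x.
Proof. intros H. apply filterlim_locally. intros eps. destruct (H eps (cond_pos eps)) as [d [Hd H']].
  apply (loc_of _ _ d Hd). intros y Hy. apply H'; try rewrite Rminus_diag, Rabs_R0; assumption. Qed.
Lemma c3_u F x u p : continuous3_at F x u p -> continuous (fun t => F x t p) u.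
Proof. intros H. apply filterlim_locally. intros eps. destruct (H eps (cond_pos eps)) as [d [Hd H']].
  apply (loc_of _ _ d Hd). intros y Hy. apply H'; try rewrite Rminus_diag, Rabs_R0; assumption. Qed.
Lemma c3_p F x u p : continuous3_at F x u p -> continuous (fun t => F x u t) p.
Proof. intros H. apply filterlim_locally. intros eps. destruct (H eps (cond_pos eps)) as [d [Hd H']].
  apply (loc_of _ _ d Hd). intros y Hy. apply H'; try rewrite Rminus_diag, Rabs_R0; assumption. Qed.
Lemma c3_up F x u p : continuous3_at F x u p -> continuity_2d_pt (fun s w => F x s w) u p.
Proof. intros H eps. destruct (H eps (cond_pos eps)) as [d [Hd H']].
  exists (mkposreal d Hd). intros s w H1 H2. apply H'; try rewrite Rminus_diag, Rabs_R0; assumption. Qed.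
Lemma c3_xu F x u p : continuous3_at F x u p -> continuity_2d_pt (fun s w => F s w p) x u.
Proof. intros H eps. destruct (H eps (cond_pos eps)) as [d [Hd H']].
  exists (mkposreal d Hd). intros s w H1 H2. apply H'; try rewrite Rminus_diag, Rabs_R0; assumption. Qed.
Lemma c3_xp F x u p : continuous3_at F x u p -> continuity_2d_pt (fun s w => F s u w) x p.
Proof. intros H eps. destruct (H eps (cond_pos eps)) as [d [Hd H']].
  exists (mkposreal d Hd). intros s w H1 H2. apply H'; try rewrite Rminus_diag, Rabs_R0; assumption. Qed.

Lemma seg z0 z t r : Rabs (z - z0) < r -> Rmin z0 z <= t <= Rmax z0 z -> Rabs (t - z0) <= Rabs (z - z0).
Proof. intros _ . unfold Rmin, Rmax. destruct Rle_dec; unfold Rabs; repeat destruct Rcase_abs; lra. Qed.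



Lemma L1 z z0 r : Rabs (z - z0) < r -> locally z (fun t => Rabs (t - z0) < r).
Proof. intros H. apply (loc_of _ _ (r - Rabs (z - z0))); [lra|].
  intros y Hy. unfold Rabs in *; repeat destruct Rcase_abs; lra. Qed.
Lemma L2 z z0 r w : Rabs (z - z0) < r -> Rmin z0 z <= w <= Rmax z0 z -> Rabs (w - z0) < r.
Proof. intros H H'. pose proof (seg z0 z w r H H'). lra. Qed.

Lemma isd_const (k x : R) : is_derive (fun _ : R => k) x 0.
Proof. exact (@is_derive_const R_AbsRing R_NormedModule k x). Qed.

Section Poinc.
Variables (a b c : fn3) (x0 u0 p0 r : R).
Definition Bx x u p := Rabs (x - x0) < r /\ Rabs (u - u0) < r /\ Rabs (p - p0) < r.
Hypotheses (Ha : smooth_on Bx a) (Hb : smooth_on Bx b) (Hc : smooth_on Bx c).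
Hypotheses (C1 : forall x u p, Bx x u p -> d_u c x u p = d_p b x u p)
           (C2 : forall x u p, Bx x u p -> d_x c x u p = d_p a x u p)
           (C3 : forall x u p, Bx x u p -> d_x b x u p = d_u a x u p).

Definition Ipot : fn3 := fun x u p =>
  RInt (fun t => a t u0 p0) x0 x + RInt (fun s => b x s p0) u0 u + RInt (fun w => c x u w) p0 p.

Lemma sm_c0 f l x u p : smooth_on Bx f -> Bx x u p -> continuous3_at (iter_part l f) x u p.
Proof. intros H H'. exact (proj1 (H l x u p H')). Qed.
Lemma sm_e0 f l d x u p : smooth_on Bx f -> Bx x u p -> ex_dpart d (iter_part l f) x u p.
Proof. intros H H'. exact (proj2 (H l x u p H') d). Qed.

Lemma exR_p f x u p : smooth_on Bx f -> Bx x u p -> ex_RInt (fun w => f x u w) p0 p.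
Proof. intros H [H1 [H2 H3]]. apply (@ex_RInt_continuous R_CompleteNormedModule). intros w Hw.
  apply (c3_p (iter_part nil f)). apply sm_c0; auto. split; [|split]; auto. eapply L2; [|exact Hw]; assumption. Qed.
Lemma exR_u f x u : smooth_on Bx f -> Bx x u p0 -> ex_RInt (fun s => f x s p0) u0 u.
Proof. intros H [H1 [H2 H3]]. apply (@ex_RInt_continuous R_CompleteNormedModule). intros w Hw.
  apply (c3_u (iter_part nil f)). apply sm_c0; auto. split; [|split]; auto. eapply L2; [|exact Hw]; assumption. Qed.
Lemma exR_x f x : smooth_on Bx f -> Bx x u0 p0 -> ex_RInt (fun t => f t u0 p0) x0 x.
Proof. intros H [H1 [H2 H3]]. apply (@ex_RInt_continuous R_CompleteNormedModule). intros w Hw.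
  apply (c3_x (iter_part nil f)). apply sm_c0; auto. split; [|split]; auto. eapply L2; [|exact Hw]; assumption. Qed.

Lemma Bx0 : 0 < r -> Bx x0 u0 p0.
Proof. intros. unfold Bx. rewrite !Rminus_diag, Rabs_R0. auto. Qed.

Lemma FTC_p f x u p : smooth_on Bx f -> Bx x u p ->
  RInt (fun w => d_p f x u w) p0 p = f x u p - f x u p0.
Proof. intros H [H1 [H2 H3]]. apply (RInt_Derive (fun w => f x u w)).
  - intros w Hw. apply (sm_e0 f nil Dp); auto. split;[|split]; auto. eapply L2; [|exact Hw]; assumption.
  - intros w Hw. apply (c3_p (iter_part (Dp::nil) f)). apply sm_c0; auto. split;[|split]; auto. eapply L2; [|exact Hw]; assumption.
Qed.
Lemma FTC_u f x u : smooth_on Bx f -> Bx x u p0 ->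
  RInt (fun s => d_u f x s p0) u0 u = f x u p0 - f x u0 p0.
Proof. intros H [H1 [H2 H3]]. apply (RInt_Derive (fun w => f x w p0)).
  - intros w Hw. apply (sm_e0 f nil Du); auto. split;[|split]; auto. eapply L2; [|exact Hw]; assumption.
  - intros w Hw. apply (c3_u (iter_part (Du::nil) f)). apply sm_c0; auto. split;[|split]; auto. eapply L2; [|exact Hw]; assumption.
Qed.

Lemma DP x u p : Bx x u p -> is_derive (fun t => Ipot x u t) p (c x u p).
Proof.
  intros [H1 [H2 H3]]. unfold Ipot.
  assert (E : is_derive (fun t => (RInt (fun t => a t u0 p0) x0 x + RInt (fun s => b x s p0) u0 u)
     + RInt (fun w => c x u w) p0 t) p (0 + c x u p)).
  { apply (is_derive_plus (fun _ => _) (fun t => RInt (fun w => c x u w) p0 t)).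
    apply isd_const.
    apply (is_derive_RInt (fun w => c x u w) (fun t => RInt (fun w => c x u w) p0 t) p0).
    - eapply filter_imp; [|apply (L1 p p0 r H3)]. intros t Ht. apply (@RInt_correct R_CompleteNormedModule).
      apply (exR_p c); auto. split; auto.
    - apply (c3_p (iter_part nil c)). apply sm_c0; auto. split; auto. }
  rewrite Rplus_0_l in E. exact E.
Qed.

Lemma DU x u p : Bx x u p -> is_derive (fun t => Ipot x t p) u (b x u p).
Proof.
  intros [H1 [H2 H3]]. unfold Ipot.
  assert (E : is_derive (fun t => (RInt (fun t => a t u0 p0) x0 x + RInt (fun s => b x s p0) u0 t)
     + RInt (fun w => c x t w) p0 p) u ((0 + b x u p0) + RInt (fun w => d_u c x u w) p0 p)).
  { apply (is_derive_plus (fun t => _ + _) (fun t => RInt (fun w => c x t w) p0 p)).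
    apply (is_derive_plus (fun _ => _) (fun t => RInt (fun s => b x s p0) u0 t)).
    apply isd_const.
    apply (is_derive_RInt (fun s => b x s p0) (fun t => RInt (fun s => b x s p0) u0 t) u0).
    - eapply filter_imp; [|apply (L1 u u0 r H2)]. intros t Ht. apply (@RInt_correct R_CompleteNormedModule).
      apply (exR_u b); auto. split; [|split]; auto. rewrite Rminus_diag, Rabs_R0.
      apply Rle_lt_trans with (Rabs (p-p0)); auto. apply Rabs_pos.
    - apply (c3_u (iter_part nil b)). apply sm_c0; auto. split;[|split]; auto. rewrite Rminus_diag, Rabs_R0.
      apply Rle_lt_trans with (Rabs (p-p0)); auto. apply Rabs_pos.
    - apply (is_derive_RInt_param (fun t w => c x t w)).
      + eapply filter_imp; [|apply (L1 u u0 r H2)]. intros t Ht w Hw.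
        apply (sm_e0 c nil Du); auto. split;[|split]; auto. eapply L2; [|exact Hw]; assumption.
      + intros w Hw. apply (c3_up (iter_part (Du::nil) c)). apply sm_c0; auto.
        split;[|split]; auto. eapply L2; [|exact Hw]; assumption.
      + eapply filter_imp; [|apply (L1 u u0 r H2)]. intros t Ht. apply (exR_p c); auto.
        split; auto. }
  replace (b x u p) with ((0 + b x u p0) + RInt (fun w => d_u c x u w) p0 p). exact E.
  rewrite (RInt_ext _ (fun w => d_p b x u w)).
  rewrite FTC_p; auto. ring. split; auto.
  intros w Hw. apply C1. split;[|split]; auto. apply (L2 p p0 r w H3). split; lra.
Qed.

Lemma DX x u p : Bx x u p -> is_derive (fun t => Ipot t u p) x (a x u p).
Proof.
  intros [H1 [H2 H3]]. unfold Ipot.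
  assert (Hp0 : Rabs (p0 - p0) < r). { rewrite Rminus_diag, Rabs_R0.
      apply Rle_lt_trans with (Rabs (p-p0)); auto. apply Rabs_pos. }
  assert (Hu0 : Rabs (u0 - u0) < r). { rewrite Rminus_diag, Rabs_R0.
      apply Rle_lt_trans with (Rabs (p-p0)); auto. apply Rabs_pos. }
  assert (E : is_derive (fun t => (RInt (fun t => a t u0 p0) x0 t + RInt (fun s => b t s p0) u0 u)
     + RInt (fun w => c t u w) p0 p) x
     ((a x u0 p0 + RInt (fun s => d_x b x s p0) u0 u) + RInt (fun w => d_x c x u w) p0 p)).
  { apply (is_derive_plus (fun t => _ + _) (fun t => RInt (fun w => c t u w) p0 p)).
    apply (is_derive_plus (fun t => RInt (fun t => a t u0 p0) x0 t) (fun t => RInt (fun s => b t s p0) u0 u)).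
    apply (is_derive_RInt (fun t => a t u0 p0) (fun t => RInt (fun t => a t u0 p0) x0 t) x0).
    - eapply filter_imp; [|apply (L1 x x0 r H1)]. intros t Ht. apply (@RInt_correct R_CompleteNormedModule).
      apply (exR_x a); auto. split; [|split]; auto. 
    - apply (c3_x (iter_part nil a)). apply sm_c0; auto. split;[|split]; auto.
    - apply (is_derive_RInt_param (fun t s => b t s p0)).
      + eapply filter_imp; [|apply (L1 x x0 r H1)]. intros t Ht w Hw.
        apply (sm_e0 b nil Defs.Dx); auto. split;[|split]; auto. eapply L2; [|exact Hw]; assumption.
      + intros w Hw. apply (c3_xu (iter_part (Defs.Dx::nil) b)). apply sm_c0; auto.
        split;[|split]; auto. eapply L2; [|exact Hw]; assumption.
      + eapply filter_imp; [|apply (L1 x x0 r H1)]. intros t Ht. apply (exR_u b); auto.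
        split; auto.
    - apply (is_derive_RInt_param (fun t w => c t u w)).
      + eapply filter_imp; [|apply (L1 x x0 r H1)]. intros t Ht w Hw.
        apply (sm_e0 c nil Defs.Dx); auto. split;[|split]; auto. eapply L2; [|exact Hw]; assumption.
      + intros w Hw. apply (c3_xp (iter_part (Defs.Dx::nil) c)). apply sm_c0; auto.
        split;[|split]; auto. eapply L2; [|exact Hw]; assumption.
      + eapply filter_imp; [|apply (L1 x x0 r H1)]. intros t Ht. apply (exR_p c); auto.
        split; auto. }
  replace (a x u p) with ((a x u0 p0 + RInt (fun s => d_x b x s p0) u0 u) + RInt (fun w => d_x c x u w) p0 p). exact E.
  rewrite (RInt_ext (fun w => d_x c x u w) (fun w => d_p a x u w)).
  rewrite (RInt_ext (fun s => d_x b x s p0) (fun s => d_u a x s p0)).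
  rewrite FTC_p, FTC_u; auto. ring. split; auto. split; auto.
  intros w Hw. apply C3. split;[|split]; auto. apply (L2 u u0 r w H2). split; lra.
  intros w Hw. apply C2. split;[|split]; auto. apply (L2 p p0 r w H3). split; lra.
Qed.
End Poinc.


Section Poinc2.
Variables (a b c : fn3) (x0 u0 p0 r : R).
Hypotheses (Ha : smooth_on (Bx x0 u0 p0 r) a) (Hb : smooth_on (Bx x0 u0 p0 r) b)
  (Hc : smooth_on (Bx x0 u0 p0 r) c).
Hypotheses (C1 : forall x u p, Bx x0 u0 p0 r x u p -> d_u c x u p = d_p b x u p)
           (C2 : forall x u p, Bx x0 u0 p0 r x u p -> d_x c x u p = d_p a x u p)
           (C3 : forall x u p, Bx x0 u0 p0 r x u p -> d_x b x u p = d_u a x u p).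
Let B := Bx x0 u0 p0 r.
Let Ip := Ipot a b c x0 u0 p0.

Lemma Bx_open : open3 B.
Proof.
  intros x u p [H1 [H2 H3]].
  exists (Rmin (r - Rabs (x - x0)) (Rmin (r - Rabs (u - u0)) (r - Rabs (p - p0)))).
  split. repeat apply Rmin_pos; lra.
  intros x' u' p' E1 E2 E3.
  pose proof (Rmin_l (r - Rabs (x - x0)) (Rmin (r - Rabs (u - u0)) (r - Rabs (p - p0)))).
  pose proof (Rmin_r (r - Rabs (x - x0)) (Rmin (r - Rabs (u - u0)) (r - Rabs (p - p0)))).
  pose proof (Rmin_l (r - Rabs (u - u0)) (r - Rabs (p - p0))).
  pose proof (Rmin_r (r - Rabs (u - u0)) (r - Rabs (p - p0))).
  pose proof (Rabs_triang (x' - x) (x - x0)). pose proof (Rabs_triang (u' - u) (u - u0)).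
  pose proof (Rabs_triang (p' - p) (p - p0)).
  replace (x' - x + (x - x0)) with (x' - x0) in * by ring.
  replace (u' - u + (u - u0)) with (u' - u0) in * by ring.
  replace (p' - p + (p - p0)) with (p' - p0) in * by ring.
  split; [|split]; lra.
Qed.

Lemma I_cont x u p : B x u p -> continuous3_at Ip x u p.
Proof.
  intros HP.
  destruct (Bx_open x u p HP) as [m [Hm Hm']].
  destruct (proj1 (Ha nil x u p HP) 1 Rlt_0_1) as [da [Hda Hda']].
  destruct (proj1 (Hb nil x u p HP) 1 Rlt_0_1) as [db [Hdb Hdb']].
  destruct (proj1 (Hc nil x u p HP) 1 Rlt_0_1) as [dc [Hdc Hdc']].
  simpl in Hda', Hdb', Hdc'.
  set (K := Rabs (a x u p) + Rabs (b x u p) + Rabs (c x u p) + 1).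
  assert (HK : 0 < K). { unfold K. pose proof (Rabs_pos (a x u p)).
    pose proof (Rabs_pos (b x u p)). pose proof (Rabs_pos (c x u p)). lra. }
  set (del := Rmin m (Rmin da (Rmin db dc)) / 2).
  assert (Hdel : 0 < del). { unfold del. apply Rdiv_lt_0_compat; [repeat apply Rmin_pos; lra|lra]. }
  assert (Hsm : forall t, Rabs t <= del -> Rabs t < m /\ Rabs t < da /\ Rabs t < db /\ Rabs t < dc).
  { intros t Ht. unfold del in Ht.
    pose proof (Rmin_l m (Rmin da (Rmin db dc))). pose proof (Rmin_r m (Rmin da (Rmin db dc))).
    pose proof (Rmin_l da (Rmin db dc)). pose proof (Rmin_r da (Rmin db dc)).
    pose proof (Rmin_l db dc). pose proof (Rmin_r db dc).
    pose proof (Rmin_pos m (Rmin da (Rmin db dc)) Hm (Rmin_pos _ _ Hda (Rmin_pos _ _ Hdb Hdc))).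
    repeat split; lra. }
  assert (Hq : forall x' u' p', Rabs (x' - x) <= del -> Rabs (u' - u) <= del -> Rabs (p' - p) <= del ->
     B x' u' p' /\ Rabs (a x' u' p') <= K /\ Rabs (b x' u' p') <= K /\ Rabs (c x' u' p') <= K).
  { intros x' u' p' E1 E2 E3. apply Hsm in E1, E2, E3.
    assert (B1 : forall v w, Rabs (v - w) < 1 -> Rabs v <= Rabs w + 1).
    { intros v w Hv. pose proof (Rabs_triang (v - w) w). replace (v - w + w) with v in H by ring. lra. }
    pose proof (Rabs_pos (a x u p)). pose proof (Rabs_pos (b x u p)). pose proof (Rabs_pos (c x u p)).
    split; [apply Hm'; tauto|].
    split; [|split].
    - eapply Rle_trans. apply B1. apply Hda'; tauto. unfold K; lra.
    - eapply Rle_trans. apply B1. apply Hdb'; tauto. unfold K; lra.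
    - eapply Rle_trans. apply B1. apply Hdc'; tauto. unfold K; lra. }
  intros eps Heps.
  exists (Rmin del (eps / (3 * K))). split.
  { apply Rmin_pos; auto. apply Rdiv_lt_0_compat; lra. }
  intros x' u' p' E1 E2 E3.
  assert (F1 : Rabs (x' - x) <= del /\ Rabs (x' - x) < eps / (3*K)).
  { split; [apply Rlt_le|]; eapply Rlt_le_trans; eauto; [apply Rmin_l|apply Rmin_r]. }
  assert (F2 : Rabs (u' - u) <= del /\ Rabs (u' - u) < eps / (3*K)).
  { split; [apply Rlt_le|]; eapply Rlt_le_trans; eauto; [apply Rmin_l|apply Rmin_r]. }
  assert (F3 : Rabs (p' - p) <= del /\ Rabs (p' - p) < eps / (3*K)).
  { split; [apply Rlt_le|]; eapply Rlt_le_trans; eauto; [apply Rmin_l|apply Rmin_r]. }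
  assert (Z : Rabs (x - x) <= del /\ Rabs (u - u) <= del /\ Rabs (p - p) <= del).
  { rewrite !Rminus_diag, Rabs_R0. repeat split; lra. }
  destruct (MVT_cor4 (fun t => Ip x' u' t) (fun t => c x' u' t) p del) with (b := p') as [z1 [Ez1 Hz1]].
  { intros t Ht. apply (DP a b c x0 u0 p0 r Hc). apply Hq; tauto. }
  { tauto. }
  destruct (MVT_cor4 (fun t => Ip x' t p) (fun t => b x' t p) u del) with (b := u') as [z2 [Ez2 Hz2]].
  { intros t Ht. apply (DU a b c x0 u0 p0 r Hb Hc C1). apply Hq; tauto. }
  { tauto. }
  destruct (MVT_cor4 (fun t => Ip t u p) (fun t => a t u p) x del) with (b := x') as [z3 [Ez3 Hz3]].
  { intros t Ht. apply (DX a b c x0 u0 p0 r Ha Hb Hc C2 C3). apply Hq; tauto. }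
  { tauto. }
  simpl in Ez1, Ez2, Ez3.
  assert (K1 : Rabs (c x' u' z1) <= K). { apply Hq; try tauto. lra. }
  assert (K2 : Rabs (b x' z2 p) <= K). { apply Hq; try tauto. lra. }
  assert (K3 : Rabs (a z3 u p) <= K). { apply Hq; try tauto. lra. }
  replace (Ip x' u' p' - Ip x u p) with ((Ip x' u' p' - Ip x' u' p) + (Ip x' u p - Ip x u p) + (Ip x' u' p - Ip x' u p)) by ring.
  rewrite Ez1, Ez2, Ez3.
  assert (G : forall k d, Rabs k <= K -> Rabs d < eps / (3*K) -> Rabs (k * d) < eps / 3).
  { intros k d Hk Hd. rewrite Rabs_mult.
    replace (eps / 3) with (K * (eps / (3 * K))) by (field; lra).
    apply Rle_lt_trans with (K * Rabs d).
    apply Rmult_le_compat_r; [apply Rabs_pos|lra].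
    apply Rmult_lt_compat_l; lra. }
  pose proof (G _ _ K1 (proj2 F3)). pose proof (G _ _ K2 (proj2 F2)). pose proof (G _ _ K3 (proj2 F1)).
  pose proof (Rabs_triang (c x' u' z1 * (p' - p) + a z3 u p * (x' - x)) (b x' z2 p * (u' - u))).
  pose proof (Rabs_triang (c x' u' z1 * (p' - p)) (a z3 u p * (x' - x))).
  assert (eps / 3 > 0) by lra.
  lra.
Qed.

Lemma I_base : base B Ip.
Proof.
  intros x u p H. split. apply I_cont; auto.
  intros d; destruct d; unfold ex_dpart.
  - eexists. apply (DX a b c x0 u0 p0 r Ha Hb Hc C2 C3); auto.
  - eexists. apply (DU a b c x0 u0 p0 r Hb Hc C1); auto.
  - eexists. apply (DP a b c x0 u0 p0 r Hc); auto.
Qed.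

Lemma I_smooth : smooth_on B Ip.
Proof.
  apply Sm_smooth. intros n. destruct n.
  - split; [apply I_base|exact I].
  - split; [apply I_base|]. intros d; destruct d.
    + apply (Sm_ext B Bx_open n a); [|apply smooth_Sm; auto].
      intros x u p H. symmetry. apply is_derive_unique. apply (DX a b c x0 u0 p0 r Ha Hb Hc C2 C3); auto.
    + apply (Sm_ext B Bx_open n b); [|apply smooth_Sm; auto].
      intros x u p H. symmetry. apply is_derive_unique. apply (DU a b c x0 u0 p0 r Hb Hc C1); auto.
    + apply (Sm_ext B Bx_open n c); [|apply smooth_Sm; auto].
      intros x u p H. symmetry. apply is_derive_unique. apply (DP a b c x0 u0 p0 r Hc); auto.
Qed.

Lemma I_partials x u p : B x u p -> d_x Ip x u p = a x u p /\ d_u Ip x u p = b x u p /\ d_p Ip x u p = c x u p.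
Proof.
  intros H. split; [|split]; apply is_derive_unique.
  apply (DX a b c x0 u0 p0 r Ha Hb Hc C2 C3); auto.
  apply (DU a b c x0 u0 p0 r Hb Hc C1); auto.
  apply (DP a b c x0 u0 p0 r Hc); auto.
Qed.
End Poinc2.

Lemma smooth_restrict (U V : R -> R -> R -> Prop) f : smooth_on U f -> (forall x u p, V x u p -> U x u p) -> smooth_on V f.
Proof. intros H S l x u p Hv. apply H. apply S. exact Hv. Qed.

Lemma poincare (U : R -> R -> R -> Prop) (HU : open3 U) (a b c : fn3) :
  smooth_on U a -> smooth_on U b -> smooth_on U c ->
  (forall x u p, U x u p -> d_u c x u p = d_p b x u p) ->
  (forall x u p, U x u p -> d_x c x u p = d_p a x u p) ->
  (forall x u p, U x u p -> d_x b x u p = d_u a x u p) ->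
  forall x u p, U x u p -> exists (V : R -> R -> R -> Prop) (I : fn3),
    open_nbhd_in U V x u p /\ smooth_on V I /\
    forall x' u' p', V x' u' p' ->
      d_x I x' u' p' = a x' u' p' /\ d_u I x' u' p' = b x' u' p' /\ d_p I x' u' p' = c x' u' p'.
Proof.
  intros Ha Hb Hc C1 C2 C3 x u p H.
  destruct (HU x u p H) as [r [Hr Hr']].
  assert (Sub : forall x' u' p', Bx x u p r x' u' p' -> U x' u' p').
  { intros x' u' p' [E1 [E2 E3]]. apply Hr'; assumption. }
  assert (Ha' := smooth_restrict U _ a Ha Sub).
  assert (Hb' := smooth_restrict U _ b Hb Sub).
  assert (Hc' := smooth_restrict U _ c Hc Sub).
  assert (C1' : forall x' u' p', Bx x u p r x' u' p' -> d_u c x' u' p' = d_p b x' u' p').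
  { intros x1 u1 p1 H1. apply C1. apply Sub. exact H1. }
  assert (C2' : forall x' u' p', Bx x u p r x' u' p' -> d_x c x' u' p' = d_p a x' u' p').
  { intros x1 u1 p1 H1. apply C2. apply Sub. exact H1. }
  assert (C3' : forall x' u' p', Bx x u p r x' u' p' -> d_x b x' u' p' = d_u a x' u' p').
  { intros x1 u1 p1 H1. apply C3. apply Sub. exact H1. }
  exists (Bx x u p r), (Ipot a b c x u p).
  split; [|split].
  - split; [apply Bx_open|split; [apply Bx0; exact Hr|exact Sub]].
  - exact (I_smooth a b c x u p r Ha' Hb' Hc' C1' C2' C3').
  - intros x' u' p' Hq. exact (I_partials a b c x u p r Ha' Hb' Hc' C1' C2' C3' x' u' p' Hq).
Qed.




Definition exd3 (f : fn3) x u p := forall d, ex_dpart d f x u p.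

Lemma exd3_plus f g x u p : exd3 f x u p -> exd3 g x u p -> exd3 (fun x u p => f x u p + g x u p) x u p.
Proof. intros H1 H2 d. apply exd_plus; auto. Qed.
Lemma exd3_minus f g x u p : exd3 f x u p -> exd3 g x u p -> exd3 (fun x u p => f x u p - g x u p) x u p.
Proof. intros H1 H2 d. apply exd_minus; auto. Qed.
Lemma exd3_mult f g x u p : exd3 f x u p -> exd3 g x u p -> exd3 (fun x u p => f x u p * g x u p) x u p.
Proof. intros H1 H2 d. apply exd_mult; auto. Qed.
Lemma exd3_inv f x u p : exd3 f x u p -> f x u p <> 0 -> exd3 (fun x u p => / f x u p) x u p.
Proof. intros H1 H2 d. apply exd_inv; auto. Qed.
Lemma exd3_const c x u p : exd3 (fun _ _ _ => c) x u p.
Proof. intros d. apply exd_const. Qed.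
Lemma exd3_p x u p : exd3 (fun _ _ p => p) x u p.
Proof. intros d. apply exd_p. Qed.

Ltac dget L d := let E := fresh in pose proof (L d) as E; cbn [dpart] in E.

Lemma V_plus V f g x u p : exd3 f x u p -> exd3 g x u p ->
  vapp V (fun x u p => f x u p + g x u p) x u p = vapp V f x u p + vapp V g x u p.
Proof. intros H1 H2. unfold vapp.
  pose proof (D_plus Defs.Dx f g x u p (H1 _) (H2 _)) as E1.
  pose proof (D_plus Du f g x u p (H1 _) (H2 _)) as E2.
  pose proof (D_plus Dp f g x u p (H1 _) (H2 _)) as E3. cbn [dpart] in E1, E2, E3.
  rewrite E1, E2, E3. ring. Qed.
Lemma V_minus V f g x u p : exd3 f x u p -> exd3 g x u p ->
  vapp V (fun x u p => f x u p - g x u p) x u p = vapp V f x u p - vapp V g x u p.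
Proof. intros H1 H2. unfold vapp.
  pose proof (D_minus Defs.Dx f g x u p (H1 _) (H2 _)) as E1.
  pose proof (D_minus Du f g x u p (H1 _) (H2 _)) as E2.
  pose proof (D_minus Dp f g x u p (H1 _) (H2 _)) as E3. cbn [dpart] in E1, E2, E3.
  rewrite E1, E2, E3. ring. Qed.
Lemma V_mult V f g x u p : exd3 f x u p -> exd3 g x u p ->
  vapp V (fun x u p => f x u p * g x u p) x u p = vapp V f x u p * g x u p + f x u p * vapp V g x u p.
Proof. intros H1 H2. unfold vapp.
  pose proof (D_mult Defs.Dx f g x u p (H1 _) (H2 _)) as E1.
  pose proof (D_mult Du f g x u p (H1 _) (H2 _)) as E2.
  pose proof (D_mult Dp f g x u p (H1 _) (H2 _)) as E3. cbn [dpart] in E1, E2, E3.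
  rewrite E1, E2, E3. ring. Qed.
Lemma V_inv V f x u p : exd3 f x u p -> f x u p <> 0 ->
  vapp V (fun x u p => / f x u p) x u p = - vapp V f x u p / (f x u p) ^ 2.
Proof. intros H1 H2. unfold vapp.
  pose proof (D_inv Defs.Dx f x u p (H1 _) H2) as E1.
  pose proof (D_inv Du f x u p (H1 _) H2) as E2.
  pose proof (D_inv Dp f x u p (H1 _) H2) as E3. cbn [dpart] in E1, E2, E3.
  rewrite E1, E2, E3. field. auto. Qed.
Lemma V_const V c x u p : vapp V (fun _ _ _ => c) x u p = 0.
Proof. unfold vapp.
  pose proof (D_const Defs.Dx c x u p) as E1.
  pose proof (D_const Du c x u p) as E2.
  pose proof (D_const Dp c x u p) as E3. cbn [dpart] in E1, E2, E3.
  rewrite E1, E2, E3. ring. Qed.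
Lemma V_p V x u p : vapp V (fun _ _ p => p) x u p = vp V x u p.
Proof. unfold vapp.
  pose proof (D_p Defs.Dx x u p) as E1.
  pose proof (D_p Du x u p) as E2.
  pose proof (D_p Dp x u p) as E3. cbn [dpart] in E1, E2, E3.
  rewrite E1, E2, E3. ring. Qed.
Lemma V_ext U (HU : open3 U) V f g x u p : (forall x u p, U x u p -> f x u p = g x u p) -> U x u p ->
  vapp V f x u p = vapp V g x u p.
Proof. intros E H. unfold vapp.
  pose proof (dpart_ext U HU Defs.Dx f g x u p E H) as E1.
  pose proof (dpart_ext U HU Du f g x u p E H) as E2.
  pose proof (dpart_ext U HU Dp f g x u p E H) as E3. cbn [dpart] in E1, E2, E3.
  rewrite E1, E2, E3. ring. Qed.

Lemma sm_exd U f x u p : smooth_on U f -> U x u p -> exd3 f x u p.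
Proof. intros H H' d. exact (proj2 (H nil x u p H') d). Qed.

Lemma det_eq U (HU : open3 U) phi xi eta l0 lam :
  smooth_on U phi -> gen_sym U phi xi eta l0 ->
  (forall x u p, U x u p -> eta x u p - xi x u p * p <> 0) ->
  (forall x u p, U x u p -> lam x u p = canon_lambda phi xi eta l0 x u p) ->
  smooth_on U lam ->
  forall x u p, U x u p ->
  vapp (Afield phi) lam x u p = d_u phi x u p + lam x u p * d_p phi x u p - lam x u p ^ 2.
Proof.
  intros Hphi [Hxi [Heta [Hl0 Hv]]] HQ Hc Hlam x u p HP.
  set (A := Afield phi).
  set (Q := fun x u p => eta x u p - xi x u p * p).
  assert (AQ : forall x u p, U x u p -> vapp A Q x u p =
      vapp A eta x u p - (vapp A xi x u p * p + xi x u p * phi x u p)).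
  { intros x' u' p' H'. unfold Q.
    rewrite V_minus; [| apply (sm_exd U); auto| apply exd3_mult; [apply (sm_exd U); auto|apply exd3_p]].
    rewrite (V_mult _ xi (fun _ _ p => p)); [|apply (sm_exd U); auto|apply exd3_p].
    rewrite V_p. reflexivity. }
  set (z := vp (prol phi xi eta l0)).
  assert (Hz : forall x u p, U x u p -> z x u p = lam x u p * Q x u p + xi x u p * phi x u p).
  { intros x' u' p' H'. unfold z. simpl. unfold Aplus. rewrite (Hc x' u' p' H').
    unfold canon_lambda. fold A. fold Q. rewrite (AQ x' u' p' H').
    unfold Q. field. apply HQ; auto. }
  destruct (Hv x u p HP) as [_ [_ E]]. simpl in E. fold A z in E.
  assert (exl : exd3 lam x u p) by (apply (sm_exd U); assumption).
  assert (exx : exd3 xi x u p) by (apply (sm_exd U); assumption).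
  assert (exe : exd3 eta x u p) by (apply (sm_exd U); assumption).
  assert (exf : exd3 phi x u p) by (apply (sm_exd U); assumption).
  assert (exQ : exd3 Q x u p) by (apply exd3_minus; [exact exe|apply exd3_mult; [exact exx|apply exd3_p]]).
  rewrite (V_ext U HU A z (fun x u p => lam x u p * Q x u p + xi x u p * phi x u p)) in E; [|exact Hz|exact HP].
  rewrite V_plus in E by (apply exd3_mult; assumption).
  rewrite V_mult in E by assumption.
  rewrite V_mult in E by assumption.
  assert (EQ := AQ x u p HP).
  assert (HL := Hc x u p HP). unfold canon_lambda in HL. fold A Q in HL.
  assert (HQ0 := HQ x u p HP). fold (Q x u p) in HQ0.
  assert (Vp : vapp (prol phi xi eta l0) phi x u p = xi x u p * d_x phi x u p + eta x u p * d_u phi x u p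
     + (Aplus phi l0 eta x u p - Aplus phi l0 xi x u p * p) * d_p phi x u p) by reflexivity.
  assert (Va : vapp A phi x u p = 1 * d_x phi x u p + p * d_u phi x u p + phi x u p * d_p phi x u p) by reflexivity.
  rewrite Vp, Va, EQ in E. rewrite EQ in HL. unfold Aplus in E. fold A in E.
  unfold Q in HQ0, E.
  set (Al := vapp A lam x u p) in *. set (Ae := vapp A eta x u p) in *. set (Ax := vapp A xi x u p) in *.
  set (fx := d_x phi x u p) in *. set (fu := d_u phi x u p) in *. set (fp := d_p phi x u p) in *.
  set (L := lam x u p) in *. set (Xi := xi x u p) in *. set (Et := eta x u p) in *. set (L0 := l0 x u p) in *.
  set (F := phi x u p) in *.
  clearbody Al Ae Ax fx fu fp L Xi Et L0 F.
  assert (HAe : Ae = L * (Et - Xi * p) - L0 * (Et - Xi * p) + (Ax * p + Xi * F)).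
  { rewrite HL. field. exact HQ0. }
  subst Ae.
  apply (Rmult_eq_reg_r (Et - Xi * p)); [|exact HQ0].

  nra.
Qed.



Definition Ex3 := VF one3 zero3 zero3.
Definition Eu3 := VF zero3 one3 zero3.
Definition Ep3 := VF zero3 zero3 one3.
Lemma dx_V F x u p : d_x F x u p = vapp Ex3 F x u p.
Proof. unfold vapp, Ex3, one3, zero3; simpl; ring. Qed.
Lemma du_V F x u p : d_u F x u p = vapp Eu3 F x u p.
Proof. unfold vapp, Eu3, one3, zero3; simpl; ring. Qed.
Lemma dp_V F x u p : d_p F x u p = vapp Ep3 F x u p.
Proof. unfold vapp, Ep3, one3, zero3; simpl; ring. Qed.

Ltac sexd := repeat match goal with
 | |- exd3 (fun x u p => _ * _) _ _ _ => apply exd3_mult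
 | |- exd3 (fun x u p => _ - _) _ _ _ => apply exd3_minus
 | |- exd3 (fun x u p => _ + _) _ _ _ => apply exd3_plus
 | |- exd3 (fun x u p => / _) _ _ _ => apply exd3_inv
 | |- exd3 (fun _ _ p => p) _ _ _ => apply exd3_p
 | |- exd3 (fun _ _ _ => _) _ _ _ => apply exd3_const
 | H : exd3 ?f ?x ?u ?p |- exd3 ?f ?x ?u ?p => exact H
end.

Section IF.
Variables (U : R -> R -> R -> Prop) (phi lA lB f g : fn3).
Hypotheses (HU : open3 U) (Hphi : smooth_on U phi) (HlA : smooth_on U lA) (HlB : smooth_on U lB)
  (Hf : smooth_on U f) (Hg : smooth_on U g)
  (Hnz : forall x u p, U x u p -> lA x u p - lB x u p <> 0 /\ f x u p <> 0 /\ g x u p <> 0)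
  (dA : forall x u p, U x u p -> vapp (Afield phi) lA x u p = d_u phi x u p + lA x u p * d_p phi x u p - lA x u p ^ 2)
  (dB : forall x u p, U x u p -> vapp (Afield phi) lB x u p = d_u phi x u p + lB x u p * d_p phi x u p - lB x u p ^ 2)
  (HAg : forall x u p, U x u p -> vapp (Afield phi) g x u p = (lB x u p - vapp (Afield phi) f x u p / f x u p) * g x u p)
  (HXg : forall x u p, U x u p -> vapp (Xf lA) g x u p = 0)
  (Hrho : forall x u p, U x u p -> vapp (Xf lA) f x u p / f x u p
           = (vapp (Xf lA) lB x u p - vapp (Xf lB) lA x u p) / (lA x u p - lB x u p)).

Let h : fn3 := fun x u p => f x u p * g x u p * (lB x u p - lA x u p).
Let mu : fn3 := fun x u p => 1 / (f x u p * g x u p * (lB x u p - lA x u p)).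
Let ca : fn3 := fun x u p => mu x u p * (lA x u p * p - phi x u p).
Let cb : fn3 := fun x u p => - (lA x u p * mu x u p).

Lemma h_nz x u p : U x u p -> h x u p <> 0.
Proof. intros H. destruct (Hnz x u p H) as [H1 [H2 H3]]. unfold h.
  apply Rmult_integral_contrapositive_currified; [apply Rmult_integral_contrapositive_currified|]; auto.
  intros E; apply H1; lra. Qed.

Lemma h_Sm n : Sm U n h.
Proof. unfold h. apply Sm_mult; auto; [apply Sm_mult; auto|apply Sm_minus; auto]; apply smooth_Sm; auto. Qed.

Lemma mu_Sm n : Sm U n mu.
Proof. apply (Sm_ext U HU n (fun x u p => (fun _ _ _ => 1) x u p * / h x u p)).
  intros; reflexivity.
  apply Sm_mult; auto. apply Sm_const; auto. apply Sm_inv; auto. apply h_nz. apply h_Sm. Qed.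

Lemma mu_smooth : smooth_on U mu.
Proof. apply Sm_smooth. apply mu_Sm. Qed.
Lemma ca_smooth : smooth_on U ca.
Proof. apply Sm_smooth; intros n. unfold ca. apply Sm_mult; auto. apply mu_Sm.
  apply Sm_minus; auto. apply Sm_mult; auto. apply smooth_Sm; auto. apply Sm_p; auto. apply smooth_Sm; auto. Qed.
Lemma cb_smooth : smooth_on U cb.
Proof. apply Sm_smooth; intros n. unfold cb.
  apply (Sm_ext U HU n (fun x u p => (fun _ _ _ => -1) x u p * (lA x u p * mu x u p))).
  intros; ring.
  apply Sm_mult; auto. apply Sm_const; auto. apply Sm_mult; auto. apply smooth_Sm; auto. apply mu_Sm. Qed.

Lemma Vmu V x u p : U x u p -> vapp V mu x u p =
  - (vapp V f x u p * g x u p * (lB x u p - lA x u p) + f x u p * vapp V g x u p * (lB x u p - lA x u p)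
     + f x u p * g x u p * (vapp V lB x u p - vapp V lA x u p)) / (h x u p) ^ 2.
Proof.
  intros H.
  assert (exf := sm_exd U f x u p Hf H). assert (exg := sm_exd U g x u p Hg H).
  assert (exA := sm_exd U lA x u p HlA H). assert (exB := sm_exd U lB x u p HlB H).
  rewrite (V_ext U HU V mu (fun x u p => (fun _ _ _ => 1) x u p * / h x u p)); [|intros; reflexivity|exact H].
  rewrite V_mult; [|apply exd3_const|apply exd3_inv; [unfold h; sexd|apply h_nz; exact H]].
  rewrite V_const. rewrite V_inv; [|unfold h; sexd|apply h_nz; exact H].
  unfold h. rewrite V_mult; [|sexd|sexd]. rewrite V_mult; [|sexd|sexd]. rewrite V_minus; [|sexd|sexd].
  unfold h; field. destruct (Hnz x u p H) as [n1 [n2 n3]]. repeat split; try assumption.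
  intro E; apply n1; lra.
Qed.


Lemma closed_all x u p : U x u p ->
  d_u mu x u p = d_p cb x u p /\ d_x mu x u p = d_p ca x u p /\ d_x cb x u p = d_u ca x u p.
Proof.
  intros H.
  assert (exf := sm_exd U f x u p Hf H). assert (exg := sm_exd U g x u p Hg H).
  assert (exA := sm_exd U lA x u p HlA H). assert (exB := sm_exd U lB x u p HlB H).
  assert (exF := sm_exd U phi x u p Hphi H). assert (exm := sm_exd U mu x u p mu_smooth H).
  assert (Ecb : forall V, vapp V cb x u p = - (vapp V lA x u p * mu x u p + lA x u p * vapp V mu x u p)).
  { intros V. rewrite (V_ext U HU V cb (fun x u p => (fun _ _ _ => -1) x u p * (lA x u p * mu x u p)));
      [|intros; unfold cb; ring|exact H].
    rewrite V_mult; [|sexd|sexd]. rewrite V_const. rewrite V_mult; [|sexd|sexd]. ring. }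
  assert (Eca : forall V, vapp V ca x u p = vapp V mu x u p * (lA x u p * p - phi x u p)
      + mu x u p * (vapp V lA x u p * p + lA x u p * vp V x u p - vapp V phi x u p)).
  { intros V. unfold ca. rewrite V_mult; [|sexd|sexd]. rewrite V_minus; [|sexd|sexd].
    rewrite V_mult; [|sexd|sexd]. rewrite V_p. ring. }
  rewrite !du_V, !dp_V, !dx_V. rewrite !Ecb, !Eca, !Vmu by exact H.
  assert (dA0 := dA x u p H). assert (dB0 := dB x u p H). assert (HAg0 := HAg x u p H).
  assert (HXg0 := HXg x u p H). assert (Hrho0 := Hrho x u p H).
  destruct (Hnz x u p H) as [n1 [n2 n3]].
  unfold mu, h.
  unfold vapp, Ex3, Eu3, Ep3, Afield, Xf, zero3, one3 in *. cbn [vx vu vp] in *.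
  clear Ecb Eca exm.
  set (fx := d_x f x u p) in *. set (fu := d_u f x u p) in *. set (fp := d_p f x u p) in *.
  set (gx := d_x g x u p) in *. set (gu := d_u g x u p) in *. set (gp := d_p g x u p) in *.
  set (Ax := d_x lA x u p) in *. set (Au := d_u lA x u p) in *. set (Ap := d_p lA x u p) in *.
  set (Bx := d_x lB x u p) in *. set (Bu := d_u lB x u p) in *. set (Bp := d_p lB x u p) in *.
  set (Fx := d_x phi x u p) in *. set (Fu := d_u phi x u p) in *. set (Fp := d_p phi x u p) in *.
  set (F0 := f x u p) in *. set (G0 := g x u p) in *. set (A := lA x u p) in *. set (B := lB x u p) in *.
  set (P := phi x u p) in *.
  clearbody fx fu fp gx gu gp Ax Au Ap Bx Bu Bp Fx Fu Fp F0 G0 A B P.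
  assert (E1 : gu = - A * gp) by lra.
  assert (E2 : fu = F0 * (((Bu + A*Bp) - (Au + B*Ap))/(A - B)) - A * fp).
  { replace (0*fx + 1*fu + A*fp) with (fu + A*fp) in Hrho0 by ring.
    replace (0*Bx + 1*Bu + A*Bp) with (Bu + A*Bp) in Hrho0 by ring.
    replace (0*Ax + 1*Au + B*Ap) with (Au + B*Ap) in Hrho0 by ring.
    assert (K : fu + A*fp = F0 * ((fu + A*fp)/F0)) by (field; exact n2).
    rewrite Hrho0 in K. lra. }
  assert (E3 : gx = (B - (fx+p*fu+P*fp)/F0)*G0 - p*gu - P*gp) by lra.
  assert (E4 : Ax = Fu + A*Fp - A^2 - p*Au - P*Ap) by lra.
  assert (E5 : Bx = Fu + B*Fp - B^2 - p*Bu - P*Bp) by lra.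
  clear dA0 dB0 HAg0 HXg0 Hrho0.
  subst gx. subst gu. subst Ax. subst Bx. subst fu.
  assert (n4 : B - A <> 0) by (intro E; apply n1; lra).
  split; [|split]; field; repeat split; assumption.
Qed.

Lemma intfac_main x u p : U x u p -> exists (V : R -> R -> R -> Prop) (I : fn3),
  open_nbhd_in U V x u p /\ smooth_on V I /\
  forall x' u' p', V x' u' p' ->
    d_x I x' u' p' = mu x' u' p' * (lA x' u' p' * p' - phi x' u' p') /\
    d_u I x' u' p' = - (lA x' u' p' * mu x' u' p') /\
    d_p I x' u' p' = mu x' u' p'.
Proof.
  intros H.
  destruct (poincare U HU ca cb mu ca_smooth cb_smooth mu_smooth
    (fun x u p H => proj1 (closed_all x u p H))
    (fun x u p H => proj1 (proj2 (closed_all x u p H)))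
    (fun x u p H => proj2 (proj2 (closed_all x u p H))) x u p H) as [V [I [HV [HI HD]]]].
  exists V, I. split; [exact HV|split; [exact HI|]].
  intros x' u' p' Hq. exact (HD x' u' p' Hq).
Qed.
End IF.



Theorem theorem4
  (U : R -> R -> R -> Prop) (phi lam1 lam2 f1 f2 g1 g2 : fn3)
  (xi1 eta1 l01 xi2 eta2 l02 : fn3)
  (HU : open3 U)
  (Hphi : smooth_on U phi)
  (Hs1 : gen_sym U phi xi1 eta1 l01)
  (Hs2 : gen_sym U phi xi2 eta2 l02)
  (HQ1 : forall x u p, U x u p -> eta1 x u p - xi1 x u p * p <> 0)
  (HQ2 : forall x u p, U x u p -> eta2 x u p - xi2 x u p * p <> 0)
  (Hc1 : forall x u p, U x u p -> lam1 x u p = canon_lambda phi xi1 eta1 l01 x u p)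
  (Hc2 : forall x u p, U x u p -> lam2 x u p = canon_lambda phi xi2 eta2 l02 x u p)
  (Hne : ~ A_equiv U phi xi1 eta1 l01 xi2 eta2 l02)
  (Hl1 : smooth_on U lam1) (Hl2 : smooth_on U lam2)
  (Hf1 : smooth_on U f1) (Hf2 : smooth_on U f2)
  (Hg1 : smooth_on U g1) (Hg2 : smooth_on U g2)
  (Hnz : forall x u p, U x u p ->
     lam1 x u p - lam2 x u p <> 0 /\ f1 x u p <> 0 /\ f2 x u p <> 0 /\
     g1 x u p <> 0 /\ g2 x u p <> 0)
  (Hrho : forall x u p, U x u p ->
     vapp (Xf lam1) f2 x u p / f2 x u p
       = (vapp (Xf lam1) lam2 x u p - vapp (Xf lam2) lam1 x u p)
         / (lam1 x u p - lam2 x u p) /\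
     vapp (Xf lam2) f1 x u p / f1 x u p
       = (vapp (Xf lam1) lam2 x u p - vapp (Xf lam2) lam1 x u p)
         / (lam1 x u p - lam2 x u p))
  (Hg : forall x u p, U x u p ->
     vapp (Afield phi) g1 x u p
       = (lam1 x u p - vapp (Afield phi) f1 x u p / f1 x u p) * g1 x u p /\
     f2 x u p * vapp (Xf lam2) g1 x u p = 0 /\
     vapp (Afield phi) g2 x u p
       = (lam2 x u p - vapp (Afield phi) f2 x u p / f2 x u p) * g2 x u p /\
     f1 x u p * vapp (Xf lam1) g2 x u p = 0) :
  let mu1 : fn3 := fun x u p =>
    1 / (f2 x u p * g2 x u p * (lam2 x u p - lam1 x u p)) in
  let mu2 : fn3 := fun x u p =>
    1 / (f1 x u p * g1 x u p * (lam1 x u p - lam2 x u p)) in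
  let M : fn3 := fun x u p =>
    1 / (f1 x u p * g1 x u p * f2 x u p * g2 x u p * (lam2 x u p - lam1 x u p)) in
  (* (1) *)
  (integrating_factor U phi mu1 /\ integrating_factor U phi mu2 /\
   (forall x u p, U x u p -> exists (V : R -> R -> R -> Prop) (I1 : fn3),
      open_nbhd_in U V x u p /\
      first_integral_assoc V phi zero3 one3 lam1 I1 /\
      forall x' u' p', V x' u' p' ->
        d_x I1 x' u' p' = mu1 x' u' p' * (lam1 x' u' p' * p' - phi x' u' p') /\
        d_u I1 x' u' p' = - (lam1 x' u' p' * mu1 x' u' p') /\
        d_p I1 x' u' p' = mu1 x' u' p') /\
   (forall x u p, U x u p -> exists (V : R -> R -> R -> Prop) (I2 : fn3),
      open_nbhd_in U V x u p /\
      first_integral_assoc V phi zero3 one3 lam2 I2 /\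
      forall x' u' p', V x' u' p' ->
        d_x I2 x' u' p' = mu2 x' u' p' * (lam2 x' u' p' * p' - phi x' u' p') /\
        d_u I2 x' u' p' = - (lam2 x' u' p' * mu2 x' u' p') /\
        d_p I2 x' u' p' = mu2 x' u' p')) /\
  (* (2) *)
  jacobi_last_multiplier U phi M.
Proof.
  intros mu1 mu2 M.
  assert (dA1 := det_eq U HU phi xi1 eta1 l01 lam1 Hphi Hs1 HQ1 Hc1 Hl1).
  assert (dA2 := det_eq U HU phi xi2 eta2 l02 lam2 Hphi Hs2 HQ2 Hc2 Hl2).
  assert (IF1 := intfac_main U phi lam1 lam2 f2 g2 HU Hphi Hl1 Hl2 Hf2 Hg2).
  assert (IF2 := intfac_main U phi lam2 lam1 f1 g1 HU Hphi Hl2 Hl1 Hf1 Hg1).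
  assert (K1 : forall x u p, U x u p -> exists (V : R -> R -> R -> Prop) (I : fn3),
    open_nbhd_in U V x u p /\ smooth_on V I /\
    forall x' u' p', V x' u' p' ->
      d_x I x' u' p' = mu1 x' u' p' * (lam1 x' u' p' * p' - phi x' u' p') /\
      d_u I x' u' p' = - (lam1 x' u' p' * mu1 x' u' p') /\
      d_p I x' u' p' = mu1 x' u' p').
  { apply IF1; try assumption.
    - intros x u p H. destruct (Hnz x u p H) as [n1 [n2 [n3 [n4 n5]]]]. tauto.
    - intros x u p H. exact (proj1 (proj2 (proj2 (Hg x u p H)))).
    - intros x u p H. destruct (Hnz x u p H) as [n1 [n2 [n3 [n4 n5]]]].
      destruct (Hg x u p H) as [_ [_ [_ E]]].
      destruct (Rmult_integral _ _ E) as [E'|E']; [contradiction|exact E'].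
    - intros x u p H. exact (proj1 (Hrho x u p H)). }
  assert (K2 : forall x u p, U x u p -> exists (V : R -> R -> R -> Prop) (I : fn3),
    open_nbhd_in U V x u p /\ smooth_on V I /\
    forall x' u' p', V x' u' p' ->
      d_x I x' u' p' = mu2 x' u' p' * (lam2 x' u' p' * p' - phi x' u' p') /\
      d_u I x' u' p' = - (lam2 x' u' p' * mu2 x' u' p') /\
      d_p I x' u' p' = mu2 x' u' p').
  { apply IF2; try assumption.
    - intros x u p H. destruct (Hnz x u p H) as [n1 [n2 [n3 [n4 n5]]]].
      split; [intro E; apply n1; lra|tauto].
    - intros x u p H. exact (proj1 (Hg x u p H)).
    - intros x u p H. destruct (Hnz x u p H) as [n1 [n2 [n3 [n4 n5]]]].
      destruct (Hg x u p H) as [_ [E _]].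
      destruct (Rmult_integral _ _ E) as [E'|E']; [contradiction|exact E'].
    - intros x u p H. destruct (Hnz x u p H) as [n1 [n2 [n3 [n4 n5]]]].
      rewrite (proj2 (Hrho x u p H)). field. repeat split; try assumption; intro E; apply n1; lra. }
  assert (FI : forall lam mu, (forall x u p, U x u p -> exists (V : R -> R -> R -> Prop) (I : fn3),
    open_nbhd_in U V x u p /\ smooth_on V I /\
    forall x' u' p', V x' u' p' ->
      d_x I x' u' p' = mu x' u' p' * (lam x' u' p' * p' - phi x' u' p') /\
      d_u I x' u' p' = - (lam x' u' p' * mu x' u' p') /\
      d_p I x' u' p' = mu x' u' p') ->
    integrating_factor U phi mu /\
    (forall x u p, U x u p -> exists (V : R -> R -> R -> Prop) (I1 : fn3),
      open_nbhd_in U V x u p /\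
      first_integral_assoc V phi zero3 one3 lam I1 /\
      forall x' u' p', V x' u' p' ->
        d_x I1 x' u' p' = mu x' u' p' * (lam x' u' p' * p' - phi x' u' p') /\
        d_u I1 x' u' p' = - (lam x' u' p' * mu x' u' p') /\
        d_p I1 x' u' p' = mu x' u' p')).
  { intros lam mu K. split.
    - intros x u p H. destruct (K x u p H) as [V [I [HV [HI HD]]]].
      exists V, I. split; [exact HV|split; [exact HI|]].
      intros x' u' p' q Hq. destruct (HD x' u' p' Hq) as [E1 [E2 E3]].
      rewrite E1, E2, E3. ring.
    - intros x u p H. destruct (K x u p H) as [V [I [HV [HI HD]]]].
      exists V, I. split; [exact HV|split; [split; [exact HI|]|exact HD]].
      intros x' u' p' Hq. destruct (HD x' u' p' Hq) as [E1 [E2 E3]].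
      unfold vapp, prol, Afield, Aplus, zero3, one3. cbn [vx vu vp].
      rewrite (V_const (Afield phi) 1), (V_const (Afield phi) 0).
      rewrite E1, E2, E3. split; ring. }
  destruct (FI lam1 mu1 K1) as [F1a F1b]. destruct (FI lam2 mu2 K2) as [F2a F2b].
  split; [tauto|].
  intros x u p H.
  destruct (Hnz x u p H) as [n1 [n2 [n3 [n4 n5]]]].
  assert (ef1 := sm_exd U f1 x u p Hf1 H). assert (ef2 := sm_exd U f2 x u p Hf2 H).
  assert (eg1 := sm_exd U g1 x u p Hg1 H). assert (eg2 := sm_exd U g2 x u p Hg2 H).
  assert (el1 := sm_exd U lam1 x u p Hl1 H). assert (el2 := sm_exd U lam2 x u p Hl2 H).
  set (Hh := fun x u p => f1 x u p * g1 x u p * f2 x u p * g2 x u p * (lam2 x u p - lam1 x u p)).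
  assert (Hnz' : Hh x u p <> 0).
  { unfold Hh. repeat apply Rmult_integral_contrapositive_currified; try assumption. intro E; apply n1; lra. }
  assert (eh : exd3 Hh x u p) by (unfold Hh; sexd).
  rewrite (V_ext U HU (Afield phi) M (fun x u p => (fun _ _ _ => 1) x u p * / Hh x u p)); [|intros; reflexivity|exact H].
  rewrite V_mult; [|apply exd3_const|apply exd3_inv; assumption].
  rewrite V_const, V_inv by assumption.
  unfold Hh. rewrite V_mult by sexd. rewrite V_mult by sexd. rewrite V_mult by sexd. rewrite V_mult by sexd.
  rewrite V_minus by sexd.
  destruct (Hg x u p H) as [HA1 [_ [HA2 _]]].
  rewrite HA1, HA2, (dA1 x u p H), (dA2 x u p H).
  unfold M.
  set (Af1 := vapp (Afield phi) f1 x u p). set (Af2 := vapp (Afield phi) f2 x u p).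
  field. repeat split; try assumption. intro E; apply n1; lra.
Qed.
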